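(* (1) $k=|B|=\ell_R((\mathfrak C:_R\mathfrak m)/\mathfrak C)\ge e-r>0$. (2) $k\le\sum_{i\in B}r_i\le e-1$; moreover, if $\sum_{i\in B}r_i=e-1$ then $s_{i_0-1}=c-e$.
   Context: Let $(R,\mathfrak m)$ be a one-dimensional local Noetherian domain with quotient field $K$, not regular, analytically irreducible (the integral closure $\overline R$ of $R$ in $K$ is a DVR and a finite $R$-module) and residually rational. Let $v$ be the valuation of $\overline R$ normalized so a uniformizer $t$ has value 1, $v(R)=\{v(a):a\in R\setminus\{0\}\}$, $\mathfrak C=(R:_K\overline R)=t^c\overline R$ with $c$ the least element of $v(R)$ with $c+\mathbb N\subseteq v(R)$, $\delta=\ell_R(\overline R/R)$, $r=\ell_R((R:_K\mathfrak m)/R)$, $e$ the least positive element of $v(R)$, $n=c-\delta$. Write $v(R)=\{s_0=0<s_1<\cdots\}$ ($s_n=c$), $R_i=\{a\in R:v(a)\ge s_i\}$, $r_i=\ell_R((R:_KR_i)/(R:_KR_{i-1}))$. Let $i_0\in[1,n]$ with $s_{i_0-1}=\min\{y\in v(R):y\ge c-e\}$, $B=\{i_0,\dots,n\}$. Let $x\in\mathfrak m$ with $v(x)=e$, $k=\ell_R(R/(\mathfrak C+xR))$, and $(\mathfrak C:_R\mathfrak m)=\{a\in R:a\mathfrak m\subseteq\mathfrak C\}$. *)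

(* Defs.v *)
From HB Require Import structures.
From mathcomp Require Import all_boot all_order all_algebra.
Set Implicit Arguments.
Unset Strict Implicit.
Unset Printing Implicit Defensive.
Import Order.TTheory GRing.Theory Num.Theory.
Local Open Scope ring_scope.

(* Subsets of a field K are predicates K -> Prop.  R is a subring of K,
   and all modules considered are R-submodules of K (fractional ideals). *)
Section Defs.
Variable K : fieldType.

Definition subsetK (A B : K -> Prop) := forall z, A z -> B z.

Definition is_subring (R : K -> Prop) :=
  [/\ R 0, R 1, (forall a b, R a -> R b -> R (a - b))
    & (forall a b, R a -> R b -> R (a * b))].

Definition is_Rmodule (R M : K -> Prop) :=
  [/\ M 0, (forall y z, M y -> M z -> M (y + z))
    & (forall a z, R a -> M z -> M (a * z))].

Definition is_ideal (R I : K -> Prop) := subsetK I R /\ is_Rmodule R I.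

Definition quotient_field_of (R : K -> Prop) :=
  forall z, exists a b, [/\ R a, R b, b != 0 & z = a / b].

Definition unit_in (R : K -> Prop) (a : K) := R a /\ exists b, R b /\ a * b = 1.

(* the set of non-units of R; when R is local this is the maximal ideal m *)
Definition max_ideal (R : K -> Prop) : K -> Prop := fun a => R a /\ ~ unit_in R a.

Definition is_local (R : K -> Prop) := is_ideal R (max_ideal R).

Definition gen_by (R : K -> Prop) (g : seq K) : K -> Prop :=
  fun z => exists c : nat -> K, (forall i, R (c i)) /\ z = \sum_(i < size g) c i * g`_i.

Definition fg_module (R M : K -> Prop) := exists g, forall z, M z <-> gen_by R g z.

Definition noetherian (R : K -> Prop) := forall I, is_ideal R I -> fg_module R I.

Definition prime_ideal (R P : K -> Prop) :=
  [/\ is_ideal R P, ~ P 1 & forall a b, R a -> R b -> P (a * b) -> P a \/ P b].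

Definition dim_one (R : K -> Prop) :=
  (exists a, max_ideal R a /\ a != 0) /\
  forall P, prime_ideal R P -> (exists a, P a /\ a != 0) ->
    forall z, P z <-> max_ideal R z.

(* regular local ring of dimension one: maximal ideal generated by one element *)
Definition is_regular (R : K -> Prop) :=
  exists y, forall z, max_ideal R z <-> exists a, R a /\ z = a * y.

Definition integral_over (R : K -> Prop) (z : K) :=
  exists (d : nat) (a : nat -> K), (forall i, R (a i)) /\
    z ^+ d + \sum_(i < d) a i * z ^+ i = 0.

Definition Rbar (R : K -> Prop) : K -> Prop := fun z => integral_over R z.

(* v is the discrete valuation of K whose valuation ring is O, normalized so
   that a uniformizer has value 1 (the value at 0 is irrelevant) *)
Definition normalized_valuation_of (O : K -> Prop) (v : K -> int) :=
  [/\ (forall y z, y != 0 -> z != 0 -> v (y * z) = v y + v z),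
      (forall y z, y != 0 -> z != 0 -> y + z != 0 ->
          Order.min (v y) (v z) <= v (y + z)),
      (exists t, t != 0 /\ v t = 1)
    & (forall z, z != 0 -> (O z <-> 0 <= v z))].

(* residually rational: R/m -> Rbar/m_Rbar is onto *)
Definition residually_rational (R : K -> Prop) (v : K -> int) :=
  forall z, Rbar R z -> exists a, R a /\ (z - a = 0 \/ 0 < v (z - a)).

Definition value_set (R : K -> Prop) (v : K -> int) : nat -> Prop :=
  fun y => exists a, [/\ R a, a != 0 & v a = y%:Z].

Definition colon (A B : K -> Prop) : K -> Prop := fun z => forall b, B b -> A (z * b).

Definition colon_in (R A B : K -> Prop) : K -> Prop := fun z => R z /\ colon A B z.

Definition conductor (R : K -> Prop) := colon R (Rbar R).

Definition Rsub (R : K -> Prop) (v : K -> int) (s : nat -> nat) (i : nat) : K -> Prop :=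
  fun a => R a /\ (a = 0 \/ (s i)%:Z <= v a).

Definition plus_mul (C R : K -> Prop) (x : K) : K -> Prop :=
  fun z => exists a b, [/\ C a, R b & z = a + x * b].

Definition strict_chain (R N M : K -> Prop) (n : nat) (f : nat -> K -> Prop) :=
  [/\ (forall z, f 0%N z <-> N z), (forall z, f n z <-> M z),
      (forall i, (i <= n)%N -> is_Rmodule R (f i))
    & (forall i, (i < n)%N -> subsetK (f i) (f i.+1) /\ exists z, f i.+1 z /\ ~ f i z)].

(* length_of R N M n : the R-module M/N has length n (n is the maximal
   length of a strict chain of submodules from N to M) *)
Definition length_of (R N M : K -> Prop) (n : nat) :=
  (exists f, strict_chain R N M n f) /\
  forall m f, strict_chain R N M m f -> (m <= n)%N.

End Defs.

Definition enumerates (S : nat -> Prop) (s : nat -> nat) :=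
  [/\ forall i, S (s i), forall i, (s i < s i.+1)%N & forall y, S y -> exists i, s i = y].

Definition conductor_exp (S : nat -> Prop) (c : nat) :=
  (S c /\ forall m, S (c + m)%N) /\
  forall c', (S c' /\ forall m, S (c' + m)%N) -> (c <= c')%N.

Definition least_pos (S : nat -> Prop) (e : nat) :=
  [/\ (0 < e)%N, S e & forall y, (0 < y)%N -> S y -> (e <= y)%N].

(* Main.v *)
From Stdlib Require Import Classical ClassicalEpsilon.
Require Import Defs.
From HB Require Import structures.
From mathcomp Require Import all_boot all_order all_algebra.
From mathcomp Require Import zify ring.
Set Implicit Arguments.
Unset Strict Implicit.
Unset Printing Implicit Defensive.
Import Order.TTheory GRing.Theory Num.Theory.
Local Open Scope ring_scope.

Section Basics.
Variable K : fieldType.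
Variable R : K -> Prop.
Variable v : K -> int.
Hypothesis Hsub : is_subring R.
Hypothesis Hval : normalized_valuation_of (Rbar R) v.

Lemma R0 : R 0. Proof. by case: Hsub. Qed.
Lemma R1 : R 1. Proof. by case: Hsub. Qed.
Lemma RB a b : R a -> R b -> R (a - b). Proof. by case: Hsub => _ _ H _; apply: H. Qed.
Lemma RM a b : R a -> R b -> R (a * b). Proof. by case: Hsub => _ _ _ H; apply: H. Qed.
Lemma RN a : R a -> R (- a). Proof. by move=> Ha; rewrite -sub0r; apply: RB => //; apply: R0. Qed.
Lemma RD a b : R a -> R b -> R (a + b).
Proof. by move=> Ha Hb; rewrite -(opprK b); apply: RB => //; apply: RN. Qed.
Lemma RX a n : R a -> R (a ^+ n).
Proof. by move=> Ha; elim: n => [|n IH]; [rewrite expr0; apply: R1 | rewrite exprS; apply: RM]. Qed.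
Lemma Rsum n (F : 'I_n -> K) : (forall i, R (F i)) -> R (\sum_(i < n) F i).
Proof.
elim: n F => [|n IH] F HF; first by rewrite big_ord0; apply: R0.
by rewrite big_ord_recr /=; apply: RD => //; apply: IH.
Qed.

Lemma vM y z : y != 0 -> z != 0 -> v (y * z) = v y + v z.
Proof. by case: Hval => H _ _ _; apply: H. Qed.
Lemma v1 : v 1 = 0.
Proof. have := vM (oner_neq0 K) (oner_neq0 K); rewrite mulr1; move: (v 1) => a H; lia. Qed.
Lemma vN1 : v (-1) = 0.
Proof.
have h : (-1 : K) != 0 by rewrite oppr_eq0 oner_neq0.
have := vM h h; rewrite mulrNN mulr1 v1; move: (v (-1)) => a H; lia.
Qed.
Lemma vN z : z != 0 -> v (- z) = v z.
Proof.
move=> hz; rewrite -mulN1r vM ?vN1 ?add0r //.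
by rewrite oppr_eq0 oner_neq0.
Qed.
Lemma vV z : z != 0 -> v z^-1 = - v z.
Proof.
move=> hz; have := vM hz (invr_neq0 hz); rewrite mulfV // v1; move: (v z) (v z^-1) => a b H; lia.
Qed.
Lemma vD y z : y != 0 -> z != 0 -> y + z != 0 -> Order.min (v y) (v z) <= v (y + z).
Proof. by case: Hval => _ H _ _; apply: H. Qed.
Lemma minE (a b : int) : Order.min a b = if a < b then a else b.
Proof. by []. Qed.
Lemma vD_lt y z : y != 0 -> z != 0 -> v y < v z -> y + z != 0 /\ v (y + z) = v y.
Proof.
move=> hy hz hlt.
have hyz : y + z != 0.
  apply/negP => /eqP h; have e : y = - z by rewrite -(subr0 y) -h; ring.
  by move: hlt; rewrite e vN // ltxx.
split => //.
have h1 := vD hy hz hyz.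
have h2 : y = (y + z) + (- z) by ring.
have hnz : - z != 0 by rewrite oppr_eq0.
have h4 : Order.min (v (y + z)) (v (- z)) <= v y.
  by rewrite [X in _ <= v X]h2; apply: vD => //; rewrite -h2.
move: h1 h4 hlt; rewrite vN // !minE.
move: (v y) (v z) (v (y + z)) => a b c'.
case: ifP => h5; case: ifP => h6 => *; lia.
Qed.

Lemma vX z n : z != 0 -> v (z ^+ n) = (n%:Z * v z).
Proof.
move=> hz; elim: n => [|n IH]; first by rewrite expr0 v1 mul0r.
rewrite exprS vM ?expf_neq0 // IH.
move: (v z) => a; lia.
Qed.
Lemma RbarE z : z != 0 -> (Rbar R z <-> 0 <= v z).
Proof. by case: Hval => _ _ _ H; apply: H. Qed.
Lemma Rbar0 : Rbar R 0.
Proof. exists 1%N, (fun _ => 0); split; first by move=> _; apply: R0.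
by rewrite big1 ?expr1 ?addr0 // => i _; rewrite mul0r. Qed.
Lemma R_Rbar z : R z -> Rbar R z.
Proof.
move=> hz; exists 1%N, (fun _ => - z); split; first by move=> _; apply: RN.
by rewrite big_ord1 expr1 expr0 mulr1 subrr.
Qed.
Lemma Rv z : R z -> z != 0 -> 0 <= v z.
Proof. by move=> hz nz; apply/(RbarE nz)/R_Rbar. Qed.
Lemma RbarP z : Rbar R z <-> (z = 0 \/ 0 <= v z).
Proof.
split.
  by case: (eqVneq z 0) => [->|nz]; [left|move/(RbarE nz); right].
case=> [->|]; first exact: Rbar0.
by case: (eqVneq z 0) => [->|nz] h; [exact: Rbar0|apply/(RbarE nz)].
Qed.
Lemma vdiv y z : y != 0 -> z != 0 -> v (y / z) = v y - v z.
Proof. by move=> hy hz; rewrite vM ?invr_neq0 // vV. Qed.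
Lemma exists_t : exists t, t != 0 /\ v t = 1.
Proof. by case: Hval. Qed.
End Basics.

Definition pb (P : Prop) : bool := if excluded_middle_informative P then true else false.
Lemma pbP (P : Prop) : reflect P (pb P).
Proof. by rewrite /pb; case: excluded_middle_informative => h; constructor. Qed.

Section Len.
Variable K : fieldType.
Variable R : K -> Prop.
Variable v : K -> int.
Hypothesis Hsub : is_subring R.
Hypothesis Hval : normalized_valuation_of (Rbar R) v.
Hypothesis Hres : residually_rational R v.

Definition vset (A : K -> Prop) (y : int) := exists a, [/\ A a, a != 0 & v a = y].

Lemma vset_sub (A B : K -> Prop) y : subsetK A B -> vset A y -> vset B y.
Proof. by move=> sAB [a [Aa nz va]]; exists a; split => //; apply: sAB. Qed.

Lemma mod0 A : is_Rmodule R A -> A 0. Proof. by case. Qed.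
Lemma modD A y z : is_Rmodule R A -> A y -> A z -> A (y + z).
Proof. by case=> _ H _; apply: H. Qed.
Lemma modM A a z : is_Rmodule R A -> R a -> A z -> A (a * z).
Proof. by case=> _ _ H; apply: H. Qed.
Lemma modN A z : is_Rmodule R A -> A z -> A (- z).
Proof. move=> HA Az; rewrite -mulN1r; apply: modM => //; apply: (RN Hsub); apply: (R1 Hsub). Qed.
Lemma modB A y z : is_Rmodule R A -> A y -> A z -> A (y - z).
Proof. by move=> HA Ay Az; apply: modD => //; apply: modN. Qed.

Lemma improve (A B : K -> Prop) w :
  is_Rmodule R A -> is_Rmodule R B -> subsetK A B ->
  B w -> ~ A w -> w != 0 -> vset A (v w) ->
  exists w', [/\ B w', ~ A w', w' != 0 & v w < v w'].
Proof.
move=> HA HB sAB Bw nAw nzw [a [Aa nza va]].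
have nzq : w / a != 0 by rewrite mulf_neq0 ?invr_neq0.
have Rq : Rbar R (w / a) by apply/(RbarE Hval nzq); rewrite (vdiv Hval) // va subrr.
case: (Hres Rq) => r [Rr hr].
case: (eqVneq (w / a - r) 0) => [/eqP|nzd].
  rewrite subr_eq0 => /eqP e; exfalso; apply: nAw.
  have -> : w = r * a by rewrite -e mulrAC -mulrA mulfV ?mulr1.
  by apply: modM.
have hpos : 0 < v (w / a - r) by case: hr => // e; move: nzd; rewrite e eqxx.
exists (a * (w / a - r)); split.
- have -> : a * (w / a - r) = w - r * a by rewrite mulrBr mulrCA mulfV // mulr1 mulrC.
  by apply: modB => //; apply: sAB; apply: modM.
- have -> : a * (w / a - r) = w - r * a by rewrite mulrBr mulrCA mulfV // mulr1 mulrC.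
  move=> Aw'; apply: nAw; have -> : w = (w - r * a) + r * a by rewrite subrK.
  by apply: modD => //; apply: modM.
- by rewrite mulf_neq0.
- rewrite (vM Hval) // va; move: hpos; move: (v (w / a - r)) (v w) => p q; lia.
Qed.

Variables (N M : K -> Prop) (lo hi : int).
Hypothesis HN : is_Rmodule R N.
Hypothesis HM : is_Rmodule R M.
Hypothesis Hlo : forall z, M z -> z != 0 -> lo <= v z.
Hypothesis Hhi : forall z, M z -> z != 0 -> hi <= v z -> N z.

Lemma step (A B : K -> Prop) w :
  is_Rmodule R A -> is_Rmodule R B -> subsetK N A -> subsetK B M -> subsetK A B ->
  B w -> ~ A w -> exists y, [/\ lo <= y, y < hi, vset B y & ~ vset A y].
Proof.
move=> HA HB sNA sBM sAB.
suff H : forall d : nat, forall w, B w -> ~ A w -> hi - v w <= d%:Z ->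
  exists y, [/\ lo <= y, y < hi, vset B y & ~ vset A y].
  by move=> Bw nAw; apply: (H `|hi - v w|%N w Bw nAw); move: (hi - v w) => q; lia.
elim=> [|d IH] w' Bw nAw hd.
all: have nzw : w' != 0 by apply/eqP => e; apply: nAw; rewrite e; apply: mod0.
all: have hlw := Hlo (sBM _ Bw) nzw.
all: case: (ltP (v w') hi) => hhi; last by (exfalso; apply: nAw; apply: sNA; apply: Hhi => //; apply: sBM).
- exfalso; move: hd hhi; move: (v w') => q; lia.
- case: (classic (vset A (v w'))) => hv; last first.
    by exists (v w'); split => //; exists w'.
  have [w'' [Bw'' nAw'' nzw'' hlt]] := improve HA HB sAB Bw nAw nzw hv.
  apply: (IH w'') => //; move: hd hlt; move: (v w') (v w'') => p q; lia.
Qed.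

Lemma chain_mono m f : strict_chain R N M m f ->
  forall i j, (i <= j <= m)%N -> subsetK (f i) (f j).
Proof.
case=> _ _ _ Hs i j /andP [hij hjm].
elim: j hij hjm => [|j IH] hij hjm.
  by move: hij; rewrite leqn0 => /eqP ->.
case: (ltngtP i j.+1) hij => // [hlt|<-] _; last by [].
move=> z /(IH hlt (ltnW hjm)); apply: (proj1 (Hs j hjm)).
Qed.

Lemma UB m f : strict_chain R N M m f ->
  exists s : seq int, [/\ size s = m, uniq s &
    forall y, y \in s -> [/\ lo <= y, y < hi, vset M y & ~ vset N y]].
Proof.
move=> Hc; have Hmono := chain_mono Hc.
case: Hc => H0 Hm Hmod Hs.
have sNf : forall i, (i <= m)%N -> subsetK N (f i).
  move=> i him z Nz; apply: (Hmono 0%N i) => //; exact/H0.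
have sfM : forall i, (i <= m)%N -> subsetK (f i) M.
  move=> i him z fz; apply/Hm; apply: (Hmono i m) => //; by rewrite him leqnn.
suff H : forall i, (i <= m)%N -> exists s : seq int, [/\ size s = i, uniq s &
    forall y, y \in s -> [/\ lo <= y, y < hi, vset (f i) y & ~ vset N y]].
  have [s [h1 h2 h3]] := H m (leqnn m); exists s; split => // y ys.
  by case: (h3 y ys) => *; split => //; apply: vset_sub (sfM m (leqnn m)) _.
elim=> [|i IH] him; first by exists [::].
have [s [h1 h2 h3]] := IH (ltnW him).
have [sub [w [fw nfw]]] := Hs i him.
have [y [hy1 hy2 hy3 hy4]] := step (Hmod i (ltnW him)) (Hmod i.+1 him)
  (sNf i (ltnW him)) (sfM i.+1 him) sub fw nfw.
exists (y :: s); split => /=; first by rewrite h1.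
  rewrite h2 andbT; apply/negP => ys; by case: (h3 y ys).
move=> y'; rewrite inE => /orP [/eqP ->|ys].
  by split => // hN; apply: hy4; apply: vset_sub hN; apply: sNf; apply: ltnW.
by case: (h3 y' ys) => ? ? ? ?; split => //; apply: vset_sub sub _.
Qed.

Hypothesis sNM : subsetK N M.
Hypothesis hlh : lo <= hi.

Definition Dp y := pb (vset M y /\ ~ vset N y).
Definition Dseq := [seq y <- [seq lo + i%:Z | i <- iota 0 `|hi - lo|] | Dp y].

Lemma memD y : (y \in Dseq) = (lo <= y < hi) && Dp y.
Proof.
rewrite mem_filter andbC; congr (_ && _).
apply/mapP/idP.
  by case=> i; rewrite mem_iota add0n => hi' ->; move: hi' hlh; move: (hi) (lo) => a b; lia.
move=> /andP [h1 h2]; exists `|y - lo|%N; first by rewrite mem_iota add0n; move: h1 h2 hlh; move: (hi) (lo) => a b; lia.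
move: h1; move: (lo) => a; lia.
Qed.

Lemma Dsorted : sorted <%R Dseq.
Proof.
apply: lt_sorted_filter.
apply: (homo_sorted (e := ltn)); last by apply: iota_ltn_sorted.
by move=> a b hab; rewrite ltrD2l ltz_nat.
Qed.

Definition Mge (h : int) (z : K) := M z /\ (z = 0 \/ h <= v z).
Definition plusm (A B : K -> Prop) (z : K) := exists a b, [/\ A a, B b & z = a + b].

Lemma Mge_mod h : is_Rmodule R (Mge h).
Proof.
split.
- by split; [apply: mod0 | left].
- move=> y z [My hy] [Mz hz]; split; first by apply: modD.
  case: (eqVneq y 0) => [->|nzy]; first by rewrite add0r.
  case: (eqVneq z 0) => [->|nzz]; first by rewrite addr0; right; case: hy => // /eqP; rewrite (negbTE nzy).
  case: (eqVneq (y + z) 0) => [->|nzyz]; [by left|right].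
  have := vD Hval nzy nzz nzyz; case: hy => [/eqP|hy]; first by rewrite (negbTE nzy).
  case: hz => [/eqP|hz]; first by rewrite (negbTE nzz).
  rewrite minE; move: hy hz; move: (v y) (v z) (v (y+z)) => a b c'; case: ifP => *; lia.
- move=> a z Ra [Mz hz]; split; first by apply: modM.
  case: (eqVneq a 0) => [->|nza]; first by rewrite mul0r; left.
  case: (eqVneq z 0) => [->|nzz]; first by rewrite mulr0; left.
  right; rewrite (vM Hval) //; have := Rv Hsub Hval Ra nza.
  case: hz => [/eqP|hz]; first by rewrite (negbTE nzz).
  move: hz; move: (v a) (v z) => p q; lia.
Qed.

Lemma plusm_mod A B : is_Rmodule R A -> is_Rmodule R B -> is_Rmodule R (plusm A B).
Proof.
move=> HA HB; split.
- by exists 0, 0; split; rewrite ?addr0 //; apply: mod0.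
- move=> y z [a [b [Aa Bb ->]]] [a' [b' [Aa' Bb' ->]]].
  exists (a + a'), (b + b'); split; try by apply: modD.
  by rewrite addrACA.
- move=> r z Rr [a [b [Aa Bb ->]]]; exists (r * a), (r * b); split; try by apply: modM.
  by rewrite mulrDr.
Qed.

Definition pD := size Dseq.
Definition thr (j : nat) := if j == 0%N then hi else nth 0 Dseq (pD - j).
Definition fch (j : nat) := plusm N (Mge (thr j)).

Lemma thr_prop j : (j < pD)%N -> thr j.+1 \in Dseq /\ thr j.+1 < thr j.
Proof.
move=> hj; rewrite /thr /=.
have hidx : (pD - j.+1 < pD)%N by move: hj; lia.
split; first by apply: mem_nth.
have := mem_nth 0 hidx; rewrite memD => /andP [/andP [_ h] _].
case: (eqVneq j 0%N) => [e|nzj]; first by move: h; rewrite e.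
have hidx2 : (pD - j < pD)%N by move: hj nzj; lia.
rewrite (lt_sorted_ltn_nth 0 Dsorted) ?inE //; move: hj nzj; lia.
Qed.

Lemma d0_min y : y \in Dseq -> thr pD <= y.
Proof.
move=> yD; have hp : (0 < pD)%N by rewrite /pD; case: (Dseq) yD.
rewrite /thr; case: eqP => [e|_]; first by move: hp; rewrite e.
rewrite subnn -(nth_index 0 yD).
case: (eqVneq (index y Dseq) 0%N) => [->|nz]; first by rewrite lexx.
apply: ltW; rewrite (lt_sorted_ltn_nth 0 Dsorted) ?inE ?index_mem ?lt0n //; by rewrite -lt0n.
Qed.

Lemma LB : exists f, strict_chain R N M pD f.
Proof.
have fmod : forall j, is_Rmodule R (fch j) by move=> j; apply: plusm_mod => //; apply: Mge_mod.
have sNf : forall j, subsetK N (fch j) by move=> j z Nz; exists z, 0; split; rewrite ?addr0 //; apply: mod0; apply: Mge_mod.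
have sfM : forall j, subsetK (fch j) M by move=> j z [a [b [Na [Mb _] ->]]]; apply: modD => //; apply: sNM.
exists fch; split.
- move=> z; split; last by apply: sNf.
  case=> a [b [Na [Mb hb] ->]]; rewrite /thr /= in hb.
  apply: modD => //; case: (eqVneq b 0) => [->|nzb]; first by apply: mod0.
  by case: hb => [/eqP|hb]; [rewrite (negbTE nzb)|apply: Hhi].
- move=> z; split; first by apply: sfM.
  move=> Mz; apply: NNPP => nf.
  have [y [h1 h2 h3 h4]] := step (fmod pD) HM (sNf pD) (fun _ h => h) (sfM pD) Mz nf.
  have yD : y \in Dseq.
    rewrite memD h1 h2 /=; apply/pbP; split => // hN; apply: h4.
    by apply: vset_sub (sNf pD) hN.
  apply: h4; case: h3 => [a [Ma nza va]]; exists a; split => //.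
  exists 0, a; split; rewrite ?add0r //; first by apply: mod0.
  by split => //; right; rewrite va; apply: d0_min.
- by move=> i _; apply: fmod.
- move=> i hi'; have [hD hlt] := thr_prop hi'.
  split.
    move=> z [a [b [Na [Mb hb] ->]]]; exists a, b; split => //; split => //.
    by case: hb => [->|hb]; [left|right; apply: le_trans hb; apply: ltW].
  move: hD; rewrite memD => /andP [_ /pbP [[w [Mw nzw vw]] nvN]].
  exists w; split; first by exists 0, w; split; rewrite ?add0r //; [apply: mod0 | split => //; right; rewrite vw].
  case=> a [b [Na [Mb hb] e]]; apply: nvN.
  case: (eqVneq b 0) => [eb|nzb]; first by exists w; split => //; rewrite e eb addr0.
  case: hb => [/eqP|hb]; first by rewrite (negbTE nzb).
  have nznb : - b != 0 by rewrite oppr_eq0.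
  have hl : v w < v (- b) by rewrite (vN Hval) // vw; apply: lt_le_trans hb.
  have [h1 h2] := vD_lt Hval nzw nznb hl.
  have ea : a = w + - b by rewrite e addrK.
  exists a; split => //; [by rewrite ea | by rewrite ea h2].
Qed.

Lemma LEN : length_of R N M pD.
Proof.
split; first exact: LB.
move=> m f Hc; have [s [hs us Hs]] := UB Hc.
rewrite -hs /pD; apply: uniq_leq_size => // y ys.
by case: (Hs y ys) => h1 h2 h3 h4; rewrite memD h1 h2 /=; apply/pbP.
Qed.
End Len.

Lemma pD_count (K : fieldType) (v : K -> int) (N M : K -> Prop) lo hi :
  pD v N M lo hi = count (fun i : nat => Dp v N M (lo + i%:Z)) (iota 0 `|hi - lo|).
Proof. by rewrite /pD /Dseq size_filter count_map. Qed.

Lemma smono (s : nat -> nat) : (forall i, (s i < s i.+1)%N) -> forall i j, (i < j)%N -> (s i < s j)%N.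
Proof.
move=> hs i; elim=> [//|j IH]; rewrite ltnS leq_eqVlt => /orP [/eqP ->|/IH h] //.
by apply: ltn_trans h _.
Qed.
Lemma smonoE (s : nat -> nat) : (forall i, (s i < s i.+1)%N) -> forall i j, (s i < s j)%N = (i < j)%N.
Proof.
move=> hs i j; case: (ltngtP i j) => [h|h|->]; first by rewrite (smono hs h).
  by apply/negbTE; rewrite -leqNgt ltnW // (smono hs h).
by rewrite ltnn.
Qed.

Lemma length_uniq (K : fieldType) (R N M : K -> Prop) a b :
  length_of R N M a -> length_of R N M b -> a = b.
Proof.
move=> [[f hf] ha] [[g hg] hb]; apply/eqP; rewrite eqn_leq.
by rewrite (hb _ _ hf) (ha _ _ hg).
Qed.

Lemma divlt (y y' p q q' m : int) : 0 < p -> y < y' -> y = q * p + m -> y' = q' * p + m -> q < q'.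
Proof. move=> h1 h2 e1 e2; rewrite e1 e2 in h2; nia. Qed.

Lemma chain_cat (K : fieldType) (R N M P : K -> Prop) a b f g :
  strict_chain R N M a f -> strict_chain R M P b g ->
  strict_chain R N P (a + b) (fun i => if (i <= a)%N then f i else g (i - a)%N).
Proof.
move=> [f0 fa fm fs] [g0 gb gm gs]; split.
- by move=> z /=; apply: f0.
- move=> z /=; case: ifP => h.
    have b0 : b = 0%N by move: h; lia.
    have -> : (a + b)%N = a by rewrite b0 addn0.
    rewrite fa -g0; move: (gb z); by rewrite b0.
  by rewrite addKn; apply: gb.
- move=> i hi /=; case: ifP => h; first by apply: fm.
  by apply: gm; move: hi h; lia.
- move=> i hi /=; case: (ltngtP i a) => h.
  + by apply: fs.
  + rewrite subSn; last exact: ltnW.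
    apply: gs; move: h hi; lia.
  + subst i; rewrite subSnn.
    have hb : (0 < b)%N by move: hi; lia.
    have [gsub [w [g1w ng0w]]] := gs 0%N hb.
    split; first by move=> z fz; apply: gsub; apply/g0; apply/fa.
    by exists w; split => // fw; apply: ng0w; apply/g0; apply/fa.
Qed.

Section Main.
Variables (K : fieldType) (R : K -> Prop) (v : K -> int)
  (s : nat -> nat) (c e delta r j0 k : nat) (rr : nat -> nat) (x : K).
Hypotheses (Hsub : is_subring R) (Hqf : quotient_field_of R)
  (Hloc : is_local R) (Hnoeth : noetherian R) (Hdim : dim_one R) (Hnreg : ~ is_regular R)
  (Hfg : fg_module R (Rbar R)) (Hval : normalized_valuation_of (Rbar R) v)
  (Hres : residually_rational R v)
  (Hs : enumerates (value_set R v) s)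
  (Hc : conductor_exp (value_set R v) c)
  (He : least_pos (value_set R v) e)
  (Hdelta : length_of R R (Rbar R) delta)
  (Hr : length_of R R (colon R (max_ideal R)) r)
  (Hrr : forall i, (j0 < i <= c - delta)%N ->
     length_of R (colon R (Rsub R v s i.-1)) (colon R (Rsub R v s i)) (rr i))
  (Hj0 : (c - e <= s j0)%N /\ forall j, (c - e <= s j)%N -> (s j0 <= s j)%N)
  (Hxm : max_ideal R x) (Hx0 : x != 0%R) (Hvx : v x = Posz e)
  (Hk : length_of R (plus_mul (conductor R) R x) R k).

Local Notation S := (value_set R v).

Lemma Rx : R x. Proof. by case: Hxm. Qed.

Lemma S_add y z : S y -> S z -> S (y + z)%N.
Proof.
move=> [a [Ra nza va]] [b [Rb nzb vb]]; exists (a * b); split.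
- exact: RM.
- by rewrite mulf_neq0.
- by rewrite (vM Hval) // va vb.
Qed.

Lemma S_xe m : S (m * e)%N.
Proof.
exists (x ^+ m); split; first by apply: RX => //; apply: Rx.
  by rewrite expf_neq0.
by rewrite (vX Hval) // Hvx -PoszM.
Qed.

Lemma unitP a : R a -> a != 0 -> v a = 0 -> unit_in R a.
Proof.
move=> Ra nza va; split => //.
have nzi : a^-1 != 0 by rewrite invr_neq0.
have : Rbar R a^-1 by apply/(RbarE Hval nzi); rewrite (vV Hval) // va.
case=> [[|d] [al [Ral Heq]]].
  by move: Heq; rewrite big_ord0 expr0 addr0 => /eqP; rewrite oner_eq0.
exists (- \sum_(i < d.+1) al i * a ^+ (d - i)%N); split.
  by apply: RN => //; apply: Rsum => // i; apply: RM => //; apply: RX.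
have H2 : a ^+ d * (a^-1 ^+ d.+1 + \sum_(i < d.+1) al i * a^-1 ^+ i) = 0 by rewrite Heq mulr0.
rewrite mulrDr mulr_sumr in H2.
have E1 : a ^+ d * a^-1 ^+ d.+1 = a^-1.
  by rewrite exprS mulrCA -exprMn mulfV // expr1n mulr1.
have E2 : forall i : 'I_d.+1, a ^+ d * (al i * a^-1 ^+ i) = al i * a ^+ (d - i)%N.
  move=> i; have hi : (i <= d)%N by rewrite -ltnS.
  rewrite mulrCA; congr (_ * _).
  rewrite -{1}(subnK hi) exprD -mulrA -exprMn mulfV // expr1n mulr1 //.
rewrite E1 (eq_bigr _ (fun i _ => E2 i)) in H2.
have -> : \sum_(i < d.+1) al i * a ^+ (d - i)%N = - a^-1 by apply/eqP; rewrite -addr_eq0 addrC; apply/eqP.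
by rewrite opprK mulfV.
Qed.

Lemma max_ve a : max_ideal R a -> a != 0 -> (e%:Z <= v a).
Proof.
move=> [Ra nu] nza; have h0 := Rv Hsub Hval Ra nza.
have hn0 : v a != 0 by apply/eqP => h; apply: nu; apply: unitP.
have [n en] : exists n : nat, v a = n%:Z by exists `|v a|%N; move: h0; move: (v a) => q; lia.
have Sn : S n by exists a.
case: He => _ _ hmin; rewrite en lez_nat; apply: hmin => //.
by move: hn0; rewrite en; case: n {en Sn}.
Qed.

Lemma denom_seq (g : seq K) : exists b, [/\ R b, b != 0 & forall i, (i < size g)%N -> R (b * g`_i)].
Proof.
elim: g => [|h g [b [Rb nzb Hb]]].
  by exists 1; split => //; [apply: R1 | rewrite oner_neq0].
have [a0 [b0 [Ra0 Rb0 nzb0 eh]]] := Hqf h.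
exists (b0 * b); split; first by apply: RM.
  by rewrite mulf_neq0.
case=> [|i] /= hi.
  have -> : b0 * b * h = b * a0 by rewrite eh; field.
  by apply: RM.
rewrite -mulrA; apply: RM => //; apply: Hb; by rewrite -ltnS.
Qed.

Lemma denom : exists b, [/\ R b, b != 0 & forall z, Rbar R z -> R (b * z)].
Proof.
have [g Hg] := Hfg.
have [b [Rb nzb Hb]] := denom_seq g.
exists b; split => // z /Hg [cc [Rcc ->]].
rewrite mulr_sumr; apply: Rsum => // i.
by rewrite mulrCA; apply: RM => //; apply: Hb.
Qed.

Lemma S_ge y : (c <= y)%N -> S y.
Proof. by move=> h; case: Hc => [[_ H] _]; rewrite -(subnKC h); apply: H. Qed.

Lemma condR z : z != 0 -> (c%:Z <= v z) -> R z.
Proof.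
have [b [Rb nzb Hb]] := denom.
suff H : forall d : nat, forall z, z != 0 -> c%:Z <= v z -> v b - v z <= d%:Z -> R z.
  by move=> nz hc; apply: (H `|v b - v z|%N) => //; move: (v b - v z) => q; lia.
elim=> [|d IH] w nzw hcw hd.
all: case: (lerP (v b) (v w)) => hbw.
1,3: have nzq : w / b != 0 by rewrite mulf_neq0 ?invr_neq0.
1,2: have -> : w = b * (w / b) by rewrite mulrCA mulfV ?mulr1.
1,2: by apply: Hb; apply/(RbarE Hval nzq); rewrite (vdiv Hval) // subr_ge0.
  by exfalso; move: hd hbw; move: (v b) (v w) => p q; lia.
have [n en] : exists n : nat, v w = n%:Z by exists `|v w|%N; move: hcw; move: (v w) => q; lia.
have Sn : S n by apply: S_ge; rewrite -lez_nat -en.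
case: Sn => a [Ra nza va].
have nzq : w / a != 0 by rewrite mulf_neq0 ?invr_neq0.
have Rq : Rbar R (w / a) by apply/(RbarE Hval nzq); rewrite (vdiv Hval) // va en subrr.
case: (Hres Rq) => rq [Rrq hr].
have ew : w = a * (w / a - rq) + rq * a by rewrite mulrBr mulrCA mulfV // mulr1 mulrC subrK.
case: (eqVneq (w / a - rq) 0) => [e0|nzd].
  by rewrite ew e0 mulr0 add0r; apply: RM.
have hpos : 0 < v (w / a - rq) by case: hr => // e0; move: nzd; rewrite e0 eqxx.
rewrite ew; apply: RD => //; last by apply: RM.
have nzw' : a * (w / a - rq) != 0 by rewrite mulf_neq0.
apply: IH => //; rewrite (vM Hval) // va -en.
  by move: hcw hpos; move: (v w) (v (w / a - rq)) => p q; lia.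
by move: hd hpos; move: (v b) (v w) (v (w / a - rq)) => p q t; lia.
Qed.

Lemma condP z : conductor R z <-> (z = 0 \/ c%:Z <= v z).
Proof.
split; last first.
  move=> hz w Rw; case: (eqVneq z 0) => [->|nzz]; first by rewrite mul0r; apply: R0.
  case: (eqVneq w 0) => [->|nzw]; first by rewrite mulr0; apply: R0.
  apply: condR; first by rewrite mulf_neq0.
  rewrite (vM Hval) //; case: hz => [/eqP|hz]; first by rewrite (negbTE nzz).
  have := (proj1 (RbarE Hval nzw)) Rw; move: hz; move: (v z) (v w) => p q; lia.
move=> hz; case: (eqVneq z 0) => [->|nzz]; [by left|right].
have Rz : R z by rewrite -(mulr1 z); apply: hz; apply: (R_Rbar Hsub); apply: (R1 Hsub).
have h0 := Rv Hsub Hval Rz nzz.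
have [n en] : exists n : nat, v z = n%:Z by exists `|v z|%N; move: h0; move: (v z) => q; lia.
have [t [nzt vt]] := exists_t Hval.
rewrite en lez_nat; case: Hc => _ hmin; apply: hmin; split.
  by rewrite -(addn0 n); exists z; split => //; rewrite en addn0.
move=> m; exists (z * t ^+ m); split.
- by apply: hz; apply/(RbarP Hsub Hval); right; rewrite (vX Hval) // vt mulr1.
- by rewrite mulf_neq0 // expf_neq0.
- by rewrite (vM Hval) ?expf_neq0 // (vX Hval) // vt en mulr1 PoszD.
Qed.

Lemma m_mod : is_Rmodule R (max_ideal R). Proof. by case: Hloc. Qed.
Lemma m_sub : subsetK (max_ideal R) R. Proof. by case: Hloc. Qed.

Lemma e_ge2 : (2 <= e)%N.
Proof.
case: He => he1 _ _; case: (ltngtP e 1) => // [|he]; first by move: he1; case: e.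
exfalso; apply: Hnreg.
have c0 : c = 0%N.
  apply/eqP; rewrite -leqn0; case: Hc => _ hmin; apply: hmin; split.
    by have := S_xe 0; rewrite mul0n.
  by move=> m; have := S_xe m; rewrite he muln1 add0n.
exists x => z; split.
  move=> mz; case: (eqVneq z 0) => [->|nzz]; first by exists 0; split; [apply: R0 | rewrite mul0r].
  have hv := max_ve mz nzz.
  exists (z / x); split; last by rewrite mulfVK.
  have nzq : z / x != 0 by rewrite mulf_neq0 ?invr_neq0.
  apply: condR => //; rewrite (vdiv Hval) // Hvx c0 he subr_ge0.
  by move: hv; rewrite he.
case=> a [Ra ->]; apply: modM m_mod Ra Hxm.
Qed.

Lemma c_pos : (0 < c)%N.
Proof.
rewrite lt0n; apply/eqP => c0; have := e_ge2; case: He => _ _ hmin.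
have S1 : S 1 by apply: S_ge; rewrite c0.
by have := hmin 1%N isT S1; case: (e) => [|[|]].
Qed.

Lemma e_le_c : (e <= c)%N.
Proof. case: He => _ _ hmin; apply: hmin; [exact: c_pos | by apply: S_ge]. Qed.

Lemma notS_c1 : ~ S c.-1.
Proof.
move=> h; have := c_pos; case: Hc => _ hmin.
have : (c <= c.-1)%N.
  apply: hmin; split => // m; case: m => [|m]; first by rewrite addn0.
  by apply: S_ge; move: c_pos; lia.
move=> h1 h2; lia.
Qed.

Definition Sb (y : nat) := pb (S y).

Lemma count0 (P : pred nat) l : (forall y, y \in l -> ~~ P y) -> count P l = 0%N.
Proof. by move=> h; rewrite (eq_in_count (a2 := pred0)) ?count_pred0 // => y /h /negbTE. Qed.

Lemma hs_inc : forall i, (s i < s i.+1)%N. Proof. by case: Hs. Qed.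
Lemma hs_in : forall i, S (s i). Proof. by case: Hs. Qed.
Lemma hs_all : forall y, S y -> exists i, s i = y. Proof. by case: Hs. Qed.

Lemma count_s i : count Sb (iota 0 (s i)) = i.
Proof.
elim: i => [|i IH].
  apply: count0 => y; rewrite mem_iota add0n => hy; apply/pbP => /hs_all [j ej].
  by move: hy; rewrite -ej (smonoE hs_inc).
have hlt := hs_inc i.
rewrite -(subnKC (ltnW hlt)) iotaD count_cat IH add0n.
have [L eL] : exists L, (s i.+1 - s i)%N = L.+1 by exists (s i.+1 - s i).-1; move: hlt; lia.
rewrite eL /= count0.
  have -> : Sb (s i) by apply/pbP; apply: hs_in.
  by rewrite addn0 addn1.
move=> y; rewrite mem_iota => /andP [h1 h2]; apply/pbP => /hs_all [j ej].
have e2 : (s i + L.+1)%N = s i.+1 by rewrite -eL subnKC // ltnW.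
have h3 : (s i < s j)%N by rewrite ej.
have h4 : (s j < s i.+1)%N by rewrite ej -e2; move: h2; lia.
move: h3 h4; rewrite !(smonoE hs_inc); lia.
Qed.

Lemma R_mod : is_Rmodule R R.
Proof. split; [apply: R0 | apply: RD | apply: RM] => //. Qed.

Lemma Rbar_mod : is_Rmodule R (Rbar R).
Proof.
split; first exact: (Rbar0 Hsub).
- move=> y z /(RbarP Hsub Hval) hy /(RbarP Hsub Hval) hz; apply/(RbarP Hsub Hval).
  case: (eqVneq y 0) => [->|nzy]; first by rewrite add0r.
  case: (eqVneq z 0) => [->|nzz]; first by rewrite addr0; right; case: hy => // /eqP; rewrite (negbTE nzy).
  case: (eqVneq (y + z) 0) => [->|nzyz]; [by left|right].
  have := vD Hval nzy nzz nzyz; case: hy => [/eqP|hy]; first by rewrite (negbTE nzy).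
  case: hz => [/eqP|hz]; first by rewrite (negbTE nzz).
  rewrite minE; move: hy hz; move: (v y) (v z) (v (y+z)) => a b c'; case: ifP => *; lia.
- move=> a z Ra /(RbarP Hsub Hval) hz; apply/(RbarP Hsub Hval).
  case: (eqVneq a 0) => [->|nza]; first by rewrite mul0r; left.
  case: (eqVneq z 0) => [->|nzz]; first by rewrite mulr0; left.
  right; rewrite (vM Hval) //; have := Rv Hsub Hval Ra nza.
  case: hz => [/eqP|hz]; first by rewrite (negbTE nzz).
  move: hz; move: (v a) (v z) => p q; lia.
Qed.

Lemma vset_t (A : K -> Prop) (n : int) : (forall z, z != 0 -> v z = n -> A z) -> vset v A n.
Proof.
move=> h; have [t [nzt vt]] := exists_t Hval.
case: n h => n h.
  exists (t ^+ n); split; [apply: h | | ]; rewrite ?expf_neq0 // (vX Hval) // vt mulr1 //.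
exists (t ^- n.+1); split; [apply: h | | ]; rewrite ?invr_neq0 ?expf_neq0 //.
  by rewrite (vV Hval) ?expf_neq0 // (vX Hval) // vt mulr1 NegzE.
by rewrite (vV Hval) ?expf_neq0 // (vX Hval) // vt mulr1 NegzE.
Qed.

Lemma delta_eq : delta = count (predC Sb) (iota 0 c).
Proof.
have L := LEN Hsub Hval Hres (N := R) (M := Rbar R) (lo := 0) (hi := c%:Z) R_mod Rbar_mod
  (fun z hz nz => proj1 (RbarE Hval nz) hz) (fun z _ nz hc => condR nz hc) (R_Rbar Hsub) (lez_nat 0 c).
rewrite (length_uniq Hdelta L) pD_count subr0 absz_nat.
apply: eq_in_count => i _ /=; rewrite add0r.
apply/pbP/idP.
  by case=> _ h; apply/negP => /pbP; apply: h.
move=> h; split.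
  by apply: vset_t => z nz vz; apply/(RbarE Hval nz); rewrite vz.
by move=> h2; move: h => /negP; apply; apply/pbP.
Qed.

Lemma n_eq : (c - delta)%N = count Sb (iota 0 c).
Proof. rewrite delta_eq; have := count_predC Sb (iota 0 c); rewrite size_iota; lia. Qed.

Lemma sn_c : s (c - delta) = c.
Proof.
have [i ei] := hs_all (S_ge (leqnn c)).
by rewrite n_eq -ei count_s.
Qed.

Lemma j0_eq : count Sb (iota 0 (c - e)) = j0.
Proof.
case: Hj0 => h1 h2.
rewrite -[in RHS](count_s j0) -(subnKC h1) iotaD count_cat add0n.
suff -> : count Sb (iota (c - e) (s j0 - (c - e))) = 0%N by rewrite addn0.
apply: count0 => y; rewrite mem_iota => /andP [y1 y2]; apply/pbP => /hs_all [j ej].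
have := h2 j; rewrite ej => /(_ y1); move: y2; rewrite subnKC //; lia.
Qed.

Lemma iota_split a b : (a <= b)%N -> iota 0 b = iota 0 a ++ iota a (b - a).
Proof. by move=> h; rewrite -{1}(subnKC h) iotaD. Qed.

Lemma K0_eq : count Sb (iota (c - e) e) = (c - delta - j0)%N.
Proof.
rewrite n_eq -j0_eq (iota_split (leq_subr e c)) count_cat.
by rewrite subKn ?e_le_c // addKn.
Qed.

Lemma countSplit (T : Type) (a b : pred T) l : count a l = (count (predI a b) l + count (predI a (predC b)) l)%N.
Proof. elim: l => //= y l ->; case: (a y); case: (b y) => /=; lia. Qed.

Lemma colon_mod (A B : K -> Prop) : is_Rmodule R A -> is_Rmodule R (colon A B).
Proof.
move=> HA; split.
- move=> b _; rewrite mul0r; exact: (mod0 HA).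
- by move=> y z hy hz b Bb; rewrite mulrDl; apply: (modD HA); [apply: hy | apply: hz].
- by move=> a z Ra hz b Bb; rewrite -mulrA; apply: (modM HA) => //; apply: hz.
Qed.

Lemma cond_mod : is_Rmodule R (conductor R).
Proof. apply: colon_mod; exact: R_mod. Qed.

Lemma cond_R z : conductor R z -> R z.
Proof. by move=> h; rewrite -(mulr1 z); apply: h; apply: (R_Rbar Hsub); apply: (R1 Hsub). Qed.

Lemma pm_mod : is_Rmodule R (plus_mul (conductor R) R x).
Proof.
split.
- by exists 0, 0; split; [apply: mod0 cond_mod | apply: R0 | rewrite mulr0 addr0].
- move=> y z [a [b [Ca Rb ->]]] [a' [b' [Ca' Rb' ->]]].
  exists (a + a'), (b + b'); split; [by apply: modD cond_mod _ _ | by apply: RD | by rewrite mulrDr addrACA].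
- move=> q z Rq [a [b [Ca Rb ->]]]; exists (q * a), (q * b); split.
  + by apply: modM cond_mod _ _.
  + by apply: RM.
  + by rewrite mulrDr mulrCA.
Qed.

Lemma Se : S e. Proof. by case: He. Qed.

Lemma vset_pm (i : nat) : (i < c)%N ->
  vset v (plus_mul (conductor R) R x) i%:Z <-> ((e <= i)%N /\ S (i - e)%N).
Proof.
move=> hic; split.
  case=> z [[a [b [Ca Rb ez]]] nzz vz].
  have [nzb hvb] : b != 0 /\ v (x * b) = i%:Z.
    case: (eqVneq a 0) => [a0|nza].
      rewrite a0 add0r in ez; split; last by rewrite -ez.
      by apply/eqP => b0; move: nzz; rewrite ez b0 mulr0 eqxx.
    have hva : c%:Z <= v a by case: (proj1 (condP a) Ca) => // /eqP; rewrite (negbTE nza).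
    have nzna : - a != 0 by rewrite oppr_eq0.
    have hl : v z < v (- a) by rewrite (vN Hval) // vz; apply: lt_le_trans hva; rewrite ltz_nat.
    have [h1 h2] := vD_lt Hval nzz nzna hl.
    have exb : z + - a = x * b by rewrite ez addrC addKr.
    split; last by rewrite -exb h2.
    by apply/eqP => b0; move: h1; rewrite exb b0 mulr0 eqxx.
  rewrite (vM Hval) // Hvx in hvb.
  have h0 := Rv Hsub Hval Rb nzb.
  have [m em] : exists m : nat, v b = m%:Z by exists `|v b|%N; move: h0; move: (v b) => q; lia.
  have eim : i = (e + m)%N by apply/eqP; rewrite -eqz_nat PoszD -em hvb.
  by rewrite eim leq_addr addKn; split => //; exists b.
case=> h1 [b [Rb nzb vb]]; exists (x * b); split.
- by exists 0, b; split; [apply: mod0 cond_mod | | rewrite add0r].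
- by rewrite mulf_neq0.
- by rewrite (vM Hval) // Hvx vb -PoszD subnKC.
Qed.

Lemma k_eq : k = (c - delta - j0)%N.
Proof.
have L := LEN Hsub Hval Hres (N := plus_mul (conductor R) R x) (M := R) (lo := 0) (hi := c%:Z) pm_mod R_mod
  (fun z hz nz => Rv Hsub Hval hz nz)
  (fun z hz nz hc => ex_intro _ z (ex_intro _ 0 (And3 (proj2 (condP z) (or_intror hc)) (R0 Hsub) (esym (etrans (congr1 _ (mulr0 x)) (addr0 z))))))
  (fun z => fun '(ex_intro a (ex_intro b (And3 Ca Rb ez))) => eq_ind_r R (RD Hsub (cond_R Ca) (RM Hsub Rx Rb)) ez)
  (lez_nat 0 c).
rewrite (length_uniq Hk L) pD_count subr0 absz_nat.
set P := (fun i : nat => (e <= i)%N && Sb (i - e)).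
have H1 : count (fun i : nat => Dp v (plus_mul (conductor R) R x) R (0 + i%:Z)) (iota 0 c)
    = count (predI Sb (predC P)) (iota 0 c).
  apply: eq_in_count => i; rewrite mem_iota add0n /= add0r => hic.
  apply/pbP/idP.
    case=> [[z [Rz nzz vz]] hn]; apply/andP; split; first by apply/pbP; exists z.
    apply/negP => /andP [h1 /pbP h2]; apply: hn; exact/(vset_pm hic).
  case/andP => /pbP h1 h2; split; first by [].
  move/(vset_pm hic) => [h3 h4]; move: h2; rewrite /P h3 /=; by move/negP; apply; apply/pbP.
have H2 : count (predI Sb P) (iota 0 c) = count Sb (iota 0 (c - e)).
  rewrite (iota_split e_le_c) count_cat.
  have -> : count (predI Sb P) (iota 0 e) = 0%N.
    by apply: count0 => y; rewrite mem_iota add0n /P /= => hy; rewrite leqNgt hy andbF.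
  rewrite add0n.
  have -> : iota e (c - e) = map (addn e) (iota 0 (c - e)) by rewrite -iotaDl addn0.
  rewrite count_map; apply: eq_in_count => y _ /=.
  rewrite /P leq_addr addKn /=.
  apply/andP/idP => [[] //|h]; split => //; apply/pbP.
  by have := S_add Se (elimT (pbP _) h).
rewrite H1; have := countSplit Sb P (iota 0 c); rewrite H2 j0_eq -n_eq; lia.
Qed.

Lemma CM_mod : is_Rmodule R (colon_in R (conductor R) (max_ideal R)).
Proof.
have H1 := colon_mod (max_ideal R) cond_mod; split.
- by split; [apply: (R0 Hsub) | apply: (mod0 H1)].
- by move=> y z [Ry Cy] [Rz Cz]; split; [apply: (RD Hsub) | apply: (modD H1)].
- by move=> a z Ra [Rz Cz]; split; [apply: (RM Hsub) | apply: (modM H1)].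
Qed.

Lemma CM_len : length_of R (conductor R) (colon_in R (conductor R) (max_ideal R)) (c - delta - j0).
Proof.
have sNM : subsetK (conductor R) (colon_in R (conductor R) (max_ideal R)).
  move=> z Cz; split; first exact: cond_R.
  by move=> b mb; rewrite mulrC; apply: (modM cond_mod) => //; apply: m_sub.
have L := LEN Hsub Hval Hres (N := conductor R) (M := colon_in R (conductor R) (max_ideal R)) (lo := 0) (hi := c%:Z)
  cond_mod CM_mod (fun z hz nz => Rv Hsub Hval (proj1 hz) nz)
  (fun z hz nz hc => proj2 (condP z) (or_intror hc)) sNM (lez_nat 0 c).
suff <- : pD v (conductor R) (colon_in R (conductor R) (max_ideal R)) 0 c = (c - delta - j0)%N by [].
rewrite pD_count subr0 absz_nat -K0_eq.
have -> : count (fun i : nat => Dp v (conductor R) (colon_in R (conductor R) (max_ideal R)) (0 + i%:Z)) (iota 0 c)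
    = count (fun i => Sb i && (c <= i + e)%N) (iota 0 c).
  apply: eq_in_count => i; rewrite mem_iota add0n /= add0r => hic.
  apply/pbP/idP.
    case=> [[z [[Rz Cz] nzz vz]] _]; apply/andP; split; first by apply/pbP; exists z.
    have nzx : z * x != 0 by rewrite mulf_neq0.
    case: (proj1 (condP _) (Cz x Hxm)) => [/eqP|]; first by rewrite (negbTE nzx).
    by rewrite (vM Hval) // vz Hvx -PoszD lez_nat.
  case/andP => /pbP [a [Ra nza va]] hce; split.
    exists a; split => //; split => // b mb.
    case: (eqVneq b 0) => [->|nzb]; first by rewrite mulr0; apply: (mod0 cond_mod).
    apply/condP; right; rewrite (vM Hval) // va.
    have := max_ve mb nzb; move: hce; rewrite -lez_nat PoszD; move: (v b) => q; lia.
  case=> z [Cz nzz vz]; case: (proj1 (condP z) Cz) => [/eqP|]; first by rewrite (negbTE nzz).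
  by rewrite vz lez_nat leqNgt hic.
rewrite (iota_split (leq_subr e c)) count_cat.
rewrite count0; last by move=> y; rewrite mem_iota add0n => hy; apply/negP => /andP [_]; move: hy; lia.
rewrite add0n subKn ?e_le_c //; apply: eq_in_count => y; rewrite mem_iota => /andP [h1 h2].
by rewrite /= (_ : (c <= y + e)%N = true) ?andbT //; move: h1 h2 e_le_c; lia.
Qed.

Lemma colon_m_v z : colon R (max_ideal R) z -> z != 0 -> [/\ R (z * x), z * x != 0 & v (z * x) = v z + e%:Z].
Proof. by move=> hz nz; split; [apply: hz | rewrite mulf_neq0 | rewrite (vM Hval) // Hvx]. Qed.

Lemma reg_contra z : colon R (max_ideal R) z -> z != 0 -> v z = - e%:Z -> False.
Proof.
move=> hz nz vz; have [Rzx nzx vzx] := colon_m_v hz nz.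
rewrite vz addNr in vzx.
have [_ [u [Ru hu]]] := unitP Rzx nzx vzx.
apply: Hnreg; exists z^-1 => w; split.
  move=> mw; exists (z * w); split; first by apply: hz.
  by rewrite mulrC mulKf.
case=> a [Ra ->].
have -> : z^-1 = u * x by apply: (mulfI nz); rewrite mulfV // -hu; ring.
by rewrite mulrA; apply: (modM m_mod) => //; apply: (RM Hsub).
Qed.

Lemma Rm_mod : is_Rmodule R (colon R (max_ideal R)).
Proof. apply: colon_mod; exact: R_mod. Qed.

Lemma R_sub_Rm : subsetK R (colon R (max_ideal R)).
Proof. by move=> z Rz b mb; apply: (RM Hsub) => //; apply: m_sub. Qed.

Lemma Rm_lo z : colon R (max_ideal R) z -> z != 0 -> - e%:Z <= v z.
Proof.
move=> hz nz; have [Rzx nzx vzx] := colon_m_v hz nz.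
have := Rv Hsub Hval Rzx nzx; rewrite vzx; move: (v z) => q; lia.
Qed.

Lemma e_le_c_int : - e%:Z <= c%:Z. Proof. move: (e) (c) => p q; lia. Qed.

Definition LRm := LEN Hsub Hval Hres (N := R) (M := colon R (max_ideal R)) (lo := - e%:Z) (hi := c%:Z)
  R_mod Rm_mod Rm_lo (fun z _ nz hc => condR nz hc) R_sub_Rm e_le_c_int.

Lemma r_eq : r = pD v R (colon R (max_ideal R)) (- e%:Z) c.
Proof. exact: length_uniq Hr LRm. Qed.

Lemma r_lb : (e - r <= c - delta - j0)%N.
Proof.
rewrite r_eq pD_count (_ : `|c%:Z - - e%:Z|%N = (c + e)%N); last by rewrite opprK -PoszD absz_nat.
rewrite iotaD count_cat add0n -K0_eq.
match goal with |- context [count ?P (iota c e)] => set X := count P (iota c e) end.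
have h1 : (count (fun i => (c <= i)%N && ~~ Sb (i - e)) (iota c e) <= X)%N.
  apply: sub_count => i /= /andP [hci /negP hS].
  have -> : - e%:Z + i%:Z = (i - e)%N%:Z by move: hci e_le_c; lia.
  apply/pbP; split; last by move=> h; apply: hS; apply/pbP.
  apply: vset_t => z nz vz b mb.
  case: (eqVneq b 0) => [->|nzb]; first by rewrite mulr0; apply: (R0 Hsub).
  apply: condR; first by rewrite mulf_neq0.
  rewrite (vM Hval) // vz; have := max_ve mb nzb; move: (v b) => q.
  have := e_le_c; move: hci; lia.
have h2 : count (fun i => (c <= i)%N && ~~ Sb (i - e)) (iota c e) = count (predC Sb) (iota (c - e) e).
  have -> : iota c e = map (addn e) (iota (c - e) e) by rewrite -iotaDl subnKC // e_le_c.
  rewrite count_map; apply: eq_in_count => y; rewrite mem_iota => /andP [y1 _].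
  by rewrite /= addKn (_ : (c <= e + y)%N = true) //; move: y1 e_le_c; lia.
have h3 := count_predC Sb (iota (c - e) e); rewrite size_iota in h3.
move: h1 h2 h3; lia.
Qed.

Local Notation Rm := (colon R (max_ideal R)).

Lemma Dfacts y : vset v Rm y -> exists a : nat, y + e%:Z = a%:Z /\ S a.
Proof.
case=> z [hz nz vz]; have [Rzx nzx vzx] := colon_m_v hz nz.
have h0 := Rv Hsub Hval Rzx nzx.
exists `|v (z * x)|%N; split; first by rewrite -vz -vzx; move: h0; move: (v (z * x)) => q; lia.
by exists (z * x); split => //; move: h0; move: (v (z * x)) => q; lia.
Qed.

Lemma vset_S (n : nat) : S n -> vset v R n%:Z.
Proof. by []. Qed.

Lemma e_pos : (0 < e)%N. Proof. by case: He. Qed.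

Lemma res_nz y : vset v Rm y -> ~ vset v R y -> - e%:Z <= y -> (y %% e%:Z)%Z != 0.
Proof.
move=> hy hny hle; apply/eqP => hm.
have ey := divz_eq y e%:Z; rewrite hm addr0 in ey.
have ep := e_pos.
case: (lerP 0 (y %/ e%:Z)%Z) => hq.
  apply: hny; have -> : y = (`|(y %/ e%:Z)%Z| * e)%N%:Z.
    by rewrite PoszM gez0_abs // -ey.
  exact: S_xe.
have hq1 : (y %/ e%:Z)%Z = -1.
  move: hle hq; rewrite {1}ey; move: (y %/ e%:Z)%Z => q; move: ep; move: (e) => p; nia.
case: hy => z [hz nz vz]; apply: (reg_contra hz nz); rewrite vz ey hq1 mulN1r.
by [].
Qed.

Lemma res_inj y y' : vset v Rm y -> ~ vset v R y' -> y < y' -> (y %% e%:Z)%Z = (y' %% e%:Z)%Z -> False.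
Proof.
move=> hy hny' hlt hm.
have [a [ea Sa]] := Dfacts hy.
have ey := divz_eq y e%:Z; have ey' := divz_eq y' e%:Z.
have ep := e_pos.
have hj : (y %/ e%:Z)%Z < (y' %/ e%:Z)%Z.
  have ey2 : y = (y %/ e%:Z)%Z * e%:Z + (y' %% e%:Z)%Z by rewrite -hm.
  by apply: (divlt _ hlt ey2 ey'); rewrite ltz_nat.
set q := (y %/ e%:Z)%Z in ey hj; set q' := (y' %/ e%:Z)%Z in ey' hj.
set m := (y %% e%:Z)%Z in ey hm; set m' := (y' %% e%:Z)%Z in ey' hm.
apply: hny'; have -> : y' = (a + `|(q' - q - 1)%R| * e)%N%:Z.
  rewrite PoszD PoszM gez0_abs; last by move: hj; lia.
  rewrite -ea ey' ey hm; ring.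
by apply: S_add => //; apply: S_xe.
Qed.

Lemma r_ub : (r <= e - 1)%N.
Proof.
rewrite r_eq /pD.
set D := Dseq v R Rm (- e%:Z) c.
have uD : uniq D by apply: lt_sorted_uniq; apply: Dsorted.
have memD' := memD v R Rm e_le_c_int.
pose f y := `|(y %% e%:Z)%Z|%N.
have ep := e_pos.
have enz : e%:Z != 0 by rewrite eqz_nat -lt0n.
have inj : {in D &, injective f}.
  move=> y y' hy hy' hf.
  move: hy hy'; rewrite !memD' => /andP [_ /pbP [vy nvy]] /andP [_ /pbP [vy' nvy']].
  have hm : (y %% e%:Z)%Z = (y' %% e%:Z)%Z.
    by have := congr1 Posz hf; rewrite /f !gez0_abs ?modz_ge0.
  case: (ltgtP y y') => // h.
    by exfalso; apply: (res_inj vy nvy' h hm).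
  by exfalso; apply: (res_inj vy' nvy h (esym hm)).
have sub : {subset map f D <= iota 1 (e - 1)}.
  move=> w /mapP [y hy ->]; rewrite mem_iota.
  move: hy; rewrite memD' => /andP [/andP [hle _] /pbP [vy nvy]].
  have h1 := res_nz vy nvy hle.
  have h2 := modz_ge0 y enz.
  have epz : 0 < e%:Z by rewrite ltz_nat.
  have h3 := ltz_pmod y epz.
  rewrite /f; move: h1 h2 h3; move: (y %% e%:Z)%Z => q; move: ep; move: (e) => p; lia.
have uD' : uniq (map f D) by rewrite (map_inj_in_uniq inj).
have := uniq_leq_size uD' sub.
by rewrite size_map size_iota.
Qed.

Lemma s_lt_c i : (i < c - delta)%N -> (s i < c)%N.
Proof. by move=> h; rewrite -[X in (_ < X)%N]sn_c (smonoE hs_inc). Qed.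

Lemma Rsub_anti a b : (s a <= s b)%N -> subsetK (Rsub R v s b) (Rsub R v s a).
Proof.
move=> h z [Rz hz]; split => //; case: hz => [->|hz]; [by left | right].
by apply: le_trans hz; rewrite lez_nat.
Qed.

Lemma colon_anti (B B' : K -> Prop) : subsetK B' B -> subsetK (colon R B) (colon R B').
Proof. by move=> h z hz b /h; apply: hz. Qed.

Lemma RsubC_mod i : is_Rmodule R (colon R (Rsub R v s i)).
Proof. apply: colon_mod; exact: R_mod. Qed.

Lemma rr_pos i : (j0 < i <= c - delta)%N -> (1 <= rr i)%N.
Proof.
move=> hi; have [_ hmax] := Hrr hi.
case: i hi hmax => [|i'] hi hmax; first by move: hi; lia.
have hlt : (s i' < c)%N by apply: s_lt_c; move: hi; lia.
have [t [nzt vt]] := exists_t Hval.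
set z := t ^+ (c.-1 - s i')%N.
have nzz : z != 0 by rewrite expf_neq0.
have vz : v z = (c.-1 - s i')%N%:Z by rewrite (vX Hval) // vt mulr1.
pose f := fun m : nat => if m == 0%N then colon R (Rsub R v s i') else colon R (Rsub R v s i'.+1).
apply: (hmax 1%N f); split.
- by [].
- by [].
- by move=> m _; rewrite /f; case: ifP => _; apply: RsubC_mod.
- move=> m; rewrite ltnS leqn0 => /eqP -> /=; split.
    by apply: colon_anti; apply: Rsub_anti; apply: ltnW; apply: hs_inc.
  exists z; split.
    move=> b [Rb hb]; case: (eqVneq b 0) => [->|nzb]; first by rewrite mulr0; apply: (R0 Hsub).
    case: hb => [/eqP|hb]; first by rewrite (negbTE nzb).
    apply: condR; first by rewrite mulf_neq0.
    rewrite (vM Hval) // vz; have := hs_inc i'; move: hb hlt.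
    move: (v b) => q; lia.
  have [a [Ra nza va]] := hs_in i'.
  have hRa : Rsub R v s i' a by split => //; right; rewrite va.
  move=> hz; have := hz a hRa.
  move=> Rza; apply: notS_c1; exists (z * a); split => //; first by rewrite mulf_neq0.
  by rewrite (vM Hval) // vz va; move: hlt; lia.
Qed.

Local Notation RS i := (colon R (Rsub R v s i)).

Lemma sum_chain d : (j0 + d <= c - delta)%N ->
  exists f, strict_chain R (RS j0) (RS (j0 + d)%N) (\sum_(j0.+1 <= i < (j0 + d).+1) rr i) f.
Proof.
elim: d => [|d IH] hd.
  rewrite addn0 big_geq //; exists (fun _ => RS j0); split => //.
  by move=> i _; apply: RsubC_mod.
have [f hf] : exists f, strict_chain R (RS j0) (RS (j0 + d)%N) (\sum_(j0.+1 <= i < (j0 + d).+1) rr i) f by apply: IH; move: hd; rewrite addnS; lia.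
have hi : (j0 < (j0 + d).+1 <= c - delta)%N by rewrite ltnS leq_addr -addnS.
have [[g hg] _] := Hrr hi.
rewrite addnS big_nat_recr /=; last by rewrite ltnS leq_addr.
exists (fun i => if (i <= \sum_(j0.+1 <= i0 < (j0 + d).+1) rr i0)%N then f i
   else g (i - \sum_(j0.+1 <= i0 < (j0 + d).+1) rr i0)%N).
exact: chain_cat hf hg.
Qed.

Lemma RSn_lo z : RS (c - delta)%N z -> z != 0 -> 0 <= v z.
Proof.
move=> hz nz; have [t [nzt vt]] := exists_t Hval.
have hw : forall m : nat, R (z * t ^+ (c + m)) /\ v (z * t ^+ (c + m)) = v z + (c + m)%N%:Z.
  move=> m; have nzw : t ^+ (c + m) != 0 by rewrite expf_neq0.
  have vw : v (t ^+ (c + m)) = (c + m)%N%:Z by rewrite (vX Hval) // vt mulr1.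
  split; last by rewrite (vM Hval) // vw.
  apply: hz; split; first by apply: condR => //; rewrite vw lez_nat leq_addr.
  by right; rewrite sn_c vw lez_nat leq_addr.
have nzw : forall m : nat, z * t ^+ (c + m) != 0 by move=> m; rewrite mulf_neq0 // expf_neq0.
have [R0' v0] := hw 0%N.
have h0 := Rv Hsub Hval R0' (nzw 0%N); rewrite v0 in h0.
set p := absz (v z + c%:Z).
have ep : v z + c%:Z = p%:Z by rewrite /p; move: h0; move: (v z) => q; lia.
have : (c <= p)%N.
  case: Hc => _ hmin; apply: hmin; split.
    by exists (z * t ^+ (c + 0)); split => //; rewrite v0 addn0 -ep.
  move=> m; have [Rm vm] := hw m; exists (z * t ^+ (c + m)); split => //.
  by rewrite vm PoszD addrA ep -PoszD.
rewrite -lez_nat -ep; move: (v z) => q; lia.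
Qed.

Lemma RS_hi z : z != 0 -> e%:Z <= v z -> RS j0 z.
Proof.
move=> nz hz b [Rb hb]; case: (eqVneq b 0) => [->|nzb]; first by rewrite mulr0; apply: (R0 Hsub).
case: hb => [/eqP|hb]; first by rewrite (negbTE nzb).
apply: condR; first by rewrite mulf_neq0.
rewrite (vM Hval) //; have := proj1 Hj0; have := e_le_c; move: hz hb.
move: (v z) (v b) => p q; lia.
Qed.

Lemma size_int (s0 : seq int) a b : uniq s0 ->
  (forall y, y \in s0 -> exists m : nat, y = m%:Z /\ (a <= m < a + b)%N) -> (size s0 <= b)%N.
Proof.
move=> us hs; have := uniq_leq_size (s2 := map Posz (iota a b)) us.
rewrite size_map size_iota; apply => y /hs [m [-> hm]].
by apply/mapP; exists m => //; rewrite mem_iota.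
Qed.

Lemma j0_le_n : (j0 <= c - delta)%N.
Proof. by rewrite n_eq (iota_split (leq_subr e c)) count_cat j0_eq leq_addr. Qed.

Lemma sum_ub : (\sum_(j0.+1 <= i < (c - delta).+1) rr i <= e - 1)%N /\
   (\sum_(j0.+1 <= i < (c - delta).+1) rr i = (e - 1)%N -> s j0 = (c - e)%N).
Proof.
have hd : (j0 + (c - delta - j0) <= c - delta)%N by rewrite subnKC // j0_le_n.
have [f hf] := sum_chain hd.
rewrite subnKC ?j0_le_n // in hf.
have [s0 [hs0 us0 Hs0]] := UB Hsub Hval Hres (N := RS j0) (M := RS (c - delta)%N) (lo := 0) (hi := e%:Z)
  RSn_lo (fun z _ nz hz => RS_hi nz hz) hf.
rewrite -hs0.
have N0 : vset v (RS j0) 0.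
  exists 1; split; [ | exact: oner_neq0 | exact: (v1 Hval)].
  by move=> b [Rb _]; rewrite mul1r.
have ep := e_ge2.
split.
  apply: (size_int (a := 1%N) us0) => y ys; case: (Hs0 y ys) => h1 h2 _ h4.
  exists `|y|%N; split; first by move: h1; lia.
  have : y != 0 by apply/eqP => y0; apply: h4; rewrite y0.
  by move: h1 h2; move: ep; lia.
move=> hsz; apply/eqP; rewrite eqn_leq (proj1 Hj0) andbT leqNgt; apply/negP => hlt.
have Ne : vset v (RS j0) (e%:Z - 1).
  apply: vset_t => z nz vz b [Rb hb].
  case: (eqVneq b 0) => [->|nzb]; first by rewrite mulr0; apply: (R0 Hsub).
  case: hb => [/eqP|hb]; first by rewrite (negbTE nzb).
  apply: condR; first by rewrite mulf_neq0.
  rewrite (vM Hval) // vz; have := e_le_c; move: hb hlt; move: (v b) => q; lia.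
have : (size s0 <= e - 2)%N.
  apply: (size_int (a := 1%N) us0) => y ys; case: (Hs0 y ys) => h1 h2 _ h4.
  exists `|y|%N; split; first by move: h1; lia.
  have : y != 0 by apply/eqP => y0; apply: h4; rewrite y0.
  have : y != e%:Z - 1 by apply/eqP => y0; apply: h4; rewrite y0.
  by move: h1 h2; move: ep; lia.
by rewrite hsz; move: ep; lia.
Qed.

Lemma final :
  (k = (c - delta - j0)%N /\
   length_of R (conductor R) (colon_in R (conductor R) (max_ideal R)) k /\
   (e - r <= k)%N /\ (0 < e - r)%N) /\
  ((k <= \sum_(j0.+1 <= i < (c - delta).+1) rr i)%N /\
   (\sum_(j0.+1 <= i < (c - delta).+1) rr i <= e - 1)%N /\
   ((\sum_(j0.+1 <= i < (c - delta).+1) rr i)%N = (e - 1)%N -> s j0 = (c - e)%N)).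
Proof.
have hk := k_eq; have [h1 h2] := sum_ub.
split.
  split => //; split; first by rewrite hk; exact: CM_len.
  split; first by rewrite hk; exact: r_lb.
  by have := r_ub; have := e_ge2; lia.
split => //.
rewrite hk.
have -> : (c - delta - j0)%N = (\sum_(j0.+1 <= i < (c - delta).+1) 1)%N.
  by rewrite sum_nat_const_nat muln1 subSS.
rewrite [X in (X <= _)%N]big_nat_cond [X in (_ <= X)%N]big_nat_cond.
apply: leq_sum => i /andP [hi _]; apply: rr_pos; move: hi; lia.
Qed.
End Main.

Theorem theorem1p4 (K : fieldType) (R : K -> Prop) (v : K -> int)
  (s : nat -> nat) (c e delta r j0 k : nat) (rr : nat -> nat) (x : K) :
  is_subring R -> quotient_field_of R ->
  is_local R -> noetherian R -> dim_one R -> ~ is_regular R ->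
  fg_module R (Rbar R) -> normalized_valuation_of (Rbar R) v ->
  residually_rational R v ->
  enumerates (value_set R v) s ->
  conductor_exp (value_set R v) c ->
  least_pos (value_set R v) e ->
  length_of R R (Rbar R) delta ->
  length_of R R (colon R (max_ideal R)) r ->
  (forall i, (j0 < i <= c - delta)%N ->
     length_of R (colon R (Rsub R v s i.-1)) (colon R (Rsub R v s i)) (rr i)) ->
  ((c - e <= s j0)%N /\ forall j, (c - e <= s j)%N -> (s j0 <= s j)%N) ->
  max_ideal R x -> x != 0%R -> v x = Posz e ->
  length_of R (plus_mul (conductor R) R x) R k ->
  (k = (c - delta - j0)%N /\
   length_of R (conductor R) (colon_in R (conductor R) (max_ideal R)) k /\
   (e - r <= k)%N /\ (0 < e - r)%N) /\
  ((k <= \sum_(j0.+1 <= i < (c - delta).+1) rr i)%N /\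
   (\sum_(j0.+1 <= i < (c - delta).+1) rr i <= e - 1)%N /\
   ((\sum_(j0.+1 <= i < (c - delta).+1) rr i)%N = (e - 1)%N -> s j0 = (c - e)%N)).
Proof.
move=> Hsub Hqf Hloc Hnoeth Hdim Hnreg Hfg Hval Hres Hs Hc He Hdelta Hr Hrr Hj0 Hxm Hx0 Hvx Hk.
by apply: (final (s := s) (x := x)); eassumption.
Qed.
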